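(* The total number of Euclidean self-dual linear codes of length $n$ over $R$ is $$\Big(\sum_{k=0}^{\lfloor n/2\rfloor}\nu_{n,k}\,2^{k(k+1)/2}\Big)^2,$$ where $\nu_{n,k}$ is the number of binary $[n,k]$ linear codes that are Euclidean self-orthogonal and doubly-even (every codeword has Hamming weight divisible by $4$).
   Context: $R=\mathbb{Z}_4[v]/(v^2-v)$. A linear code of length $n$ over $R$ is an $R$-submodule $\mathcal{C}$ of $R^n$; it is Euclidean self-dual if $\mathcal{C}=\mathcal{C}^\perp$ where $\mathcal{C}^\perp=\{\mathbf{x}\in R^n:\sum_i x_ic_i=0\ \forall\mathbf{c}\in\mathcal{C}\}$. *)

(* Defs.v *)
From HB Require Import structures.
From mathcomp Require Import all_boot all_order all_algebra.
Set Implicit Arguments. Unset Strict Implicit. Unset Printing Implicit Defensive.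
Import GRing.Theory.

(* The ring R = Z_4[v]/(v^2 - v): an element a + b v (a, b in Z_4) is
   represented by the pair (a, b).  Multiplication uses v^2 = v:
   (a + b v)(c + d v) = ac + (ad + bc + bd) v. *)
Definition Rt : finType := ('Z_4 * 'Z_4)%type.
Definition Rzero : Rt := (0%R, 0%R).
Definition Radd (x y : Rt) : Rt := ((x.1 + y.1)%R, (x.2 + y.2)%R).
Definition Rmul (x y : Rt) : Rt :=
  ((x.1 * y.1)%R, (x.1 * y.2 + x.2 * y.1 + x.2 * y.2)%R).

Definition Rvec (n : nat) : finType := {ffun 'I_n -> Rt}.
Definition vzero n : Rvec n := [ffun => Rzero].
Definition vadd n (x y : Rvec n) : Rvec n := [ffun i => Radd (x i) (y i)].
Definition vscale n (r : Rt) (x : Rvec n) : Rvec n := [ffun i => Rmul r (x i)].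
Definition dotR n (x y : Rvec n) : Rt := \big[Radd/Rzero]_(i < n) Rmul (x i) (y i).

Definition R_linear_code n (C : {set Rvec n}) : bool :=
  [&& vzero n \in C,
      [forall x in C, forall y in C, vadd x y \in C] &
      [forall r : Rt, forall x in C, vscale r x \in C]].

Definition R_dual n (C : {set Rvec n}) : {set Rvec n} :=
  [set x | [forall c in C, dotR x c == Rzero]].

Definition R_self_dual n (C : {set Rvec n}) : bool := C == R_dual C.

Definition bin_linear_code n (C : {set 'rV['F_2]_n}) : bool :=
  [&& (0 : 'rV['F_2]_n)%R \in C,
      [forall x in C, forall y in C, (x + y)%R \in C] &
      [forall a : 'F_2, forall x in C, (a *: x)%R \in C]].

Definition bin_dot n (x y : 'rV['F_2]_n) : 'F_2 := (\sum_(i < n) x ord0 i * y ord0 i)%R.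

Definition bin_self_orthogonal n (C : {set 'rV['F_2]_n}) : bool :=
  [forall x in C, forall y in C, bin_dot x y == 0%R].

Definition hweight n (x : 'rV['F_2]_n) : nat := #|[set i | x ord0 i != 0%R]|.

Definition doubly_even n (C : {set 'rV['F_2]_n}) : bool :=
  [forall x in C, 4 %| hweight x].

Definition nu (n k : nat) : nat :=
  #|[set C : {set 'rV['F_2]_n} | [&& bin_linear_code C, #|C| == 2 ^ k,
                                     bin_self_orthogonal C & doubly_even C]]|.

(* Main.v *)
Require Import Defs.
From mathcomp Require Import all_boot all_order all_algebra.
Set Implicit Arguments. Unset Strict Implicit. Unset Printing Implicit Defensive.
Import GRing.Theory.

Open Scope ring_scope.

Definition res4 (z : 'Z_4) : 'F_2 := (odd z)%:R.
Definition Lv (a : 'F_2) : 'Z_4 := (a : nat)%:R.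
Definition Tw (a : 'F_2) : 'Z_4 := (2 * a)%:R.
Definition hf (z : 'Z_4) : 'F_2 := (odd (z %/ 2))%:R.

Ltac c4 := case=> [[|[|[|[|?]]]] ?] //.
Ltac c2 := case=> [[|[|?]] ?] //.

Lemma decomp4 z : z = Lv (res4 z) + Tw (hf z).
Proof. by apply/eqP; move: z; c4. Qed.
Lemma res4D x y : res4 (x + y) = res4 x + res4 y.
Proof. by apply/eqP; move: x y; c4; c4. Qed.
Lemma res4M x y : res4 (x * y) = res4 x * res4 y.
Proof. by apply/eqP; move: x y; c4; c4. Qed.
Lemma res4N x : res4 (- x) = res4 x.
Proof. by apply/eqP; move: x; c4. Qed.
Lemma res40 : res4 0 = 0. Proof. by []. Qed.
Lemma res4Lv a : res4 (Lv a) = a.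
Proof. by apply/eqP; move: a; c2. Qed.
Lemma res4Tw a : res4 (Tw a) = 0.
Proof. by apply/eqP; move: a; c2. Qed.
Lemma TwD a b : Tw (a + b) = Tw a + Tw b.
Proof. by apply/eqP; move: a b; c2; c2. Qed.
Lemma TwN a : Tw (- a) = - Tw a.
Proof. by apply/eqP; move: a; c2. Qed.
Lemma TwM a z : Tw a * z = Tw (a * res4 z).
Proof. by apply/eqP; move: a z; c2; c4. Qed.
Lemma TwMl z a : z * Tw a = Tw (res4 z * a).
Proof. by apply/eqP; move: a z; c2; c4. Qed.
Lemma Tw_inj : injective Tw.
Proof. by move=> a b; apply: contra_eq; move: a b; c2; c2. Qed.
Lemma Tw0 : Tw 0 = 0. Proof. by []. Qed.
Lemma Lv0 : Lv 0 = 0. Proof. by []. Qed.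
Lemma LvM a b : Lv a * Lv b = Lv (a * b).
Proof. by apply/eqP; move: a b; c2; c2. Qed.
Lemma res0_Tw z : res4 z = 0 -> z = Tw (hf z).
Proof. by apply: contra_eq; move: z; c4. Qed.
Lemma sq4 z : z * z = Lv (res4 z).
Proof. by apply/eqP; move: z; c4. Qed.
Lemma Lv_nat a : Lv a = (a != 0)%:R.
Proof. by apply/eqP; move: a; c2. Qed.
Lemma Z4_nat_eq0 m : ((m%:R : 'Z_4) == 0) = (4 %| m)%N.
Proof. by rewrite -val_eqE /= val_Zp_nat. Qed.
Lemma double4 z : (z + z == 0) = (res4 z == 0).
Proof. by move: z; c4. Qed.
Lemma LvMTw a b : Lv a * Tw b = Tw (a * b).
Proof. by apply/eqP; move: a b; c2; c2. Qed.
Lemma TwTw a b : Tw a * Tw b = 0.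
Proof. by apply/eqP; move: a b; c2; c2. Qed.
Lemma F2_double (a : 'F_2) : a + a = 0.
Proof. by apply/eqP; move: a; c2. Qed.
Lemma F2N (a : 'F_2) : - a = a.
Proof. by apply/eqP; move: a; c2. Qed.
Lemma double4E z : z + z = 0 -> res4 z = 0.
Proof. by apply: contra_eq; move: z; c4. Qed.

Open Scope ring_scope.

Section Vec.
Variable n : nat.
Notation V4 := 'rV['Z_4]_n.
Notation V2 := 'rV['F_2]_n.

Definition liftv (g : V2) : V4 := map_mx Lv g.
Definition twv (b : V2) : V4 := map_mx Tw b.
Definition resv (x : V4) : V2 := map_mx res4 x.
Definition hfv (x : V4) : V2 := map_mx hf x.
Definition dot4 (x y : V4) : 'Z_4 := \sum_(i < n) x 0 i * y 0 i.

Lemma decompv x : x = liftv (resv x) + twv (hfv x).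
Proof. by apply/matrixP=> i j; rewrite !mxE -decomp4. Qed.
Lemma resvD x y : resv (x + y) = resv x + resv y.
Proof. by apply/matrixP=> i j; rewrite !mxE res4D. Qed.
Lemma resvN x : resv (- x) = resv x.
Proof. by apply/matrixP=> i j; rewrite !mxE res4N. Qed.
Lemma resvB x y : resv (x - y) = resv x + resv y.
Proof. by rewrite resvD resvN. Qed.
Lemma resv0 : resv 0 = 0.
Proof. by apply/matrixP=> i j; rewrite !mxE. Qed.
Lemma resvZ a x : resv (Lv a *: x) = a *: resv x.
Proof. by apply/matrixP=> i j; rewrite !mxE res4M res4Lv. Qed.
Lemma resv_sum I (r : seq I) P (F : I -> V4) :
  resv (\sum_(i <- r | P i) F i) = \sum_(i <- r | P i) resv (F i).
Proof. exact: (big_morph resv resvD resv0). Qed.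
Lemma resv_liftv g : resv (liftv g) = g.
Proof. by apply/matrixP=> i j; rewrite !mxE res4Lv. Qed.
Lemma resv_twv b : resv (twv b) = 0.
Proof. by apply/matrixP=> i j; rewrite !mxE res4Tw. Qed.
Lemma twvD a b : twv (a + b) = twv a + twv b.
Proof. by apply/matrixP=> i j; rewrite !mxE TwD. Qed.
Lemma twvN a : twv (- a) = - twv a.
Proof. by apply/matrixP=> i j; rewrite !mxE TwN. Qed.
Lemma twvB a b : twv (a - b) = twv a - twv b.
Proof. by rewrite twvD twvN. Qed.
Lemma twv0 : twv 0 = 0.
Proof. by apply/matrixP=> i j; rewrite !mxE. Qed.
Lemma liftv0 : liftv 0 = 0.
Proof. by apply/matrixP=> i j; rewrite !mxE. Qed.
Lemma twv_inj : injective twv.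
Proof.
move=> a b /matrixP h; apply/matrixP=> i j; apply: Tw_inj.
by have := h i j; rewrite !mxE.
Qed.
Lemma res0_twv x : resv x = 0 -> x = twv (hfv x).
Proof.
move/matrixP=> h; apply/matrixP=> i j; rewrite !mxE; apply: res0_Tw.
by have := h i j; rewrite !mxE.
Qed.

Lemma dot4C x y : dot4 x y = dot4 y x.
Proof. by apply: eq_bigr=> i _; rewrite mulrC. Qed.
Lemma dot4Dl x y z : dot4 (x + y) z = dot4 x z + dot4 y z.
Proof. by rewrite /dot4 -big_split; apply: eq_bigr=> i _; rewrite mxE mulrDl. Qed.
Lemma dot4Nl x z : dot4 (- x) z = - dot4 x z.
Proof. by rewrite /dot4 -sumrN; apply: eq_bigr=> i _; rewrite mxE mulNr. Qed.
Lemma dot4Zl a x z : dot4 (a *: x) z = a * dot4 x z.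
Proof. by rewrite /dot4 mulr_sumr; apply: eq_bigr=> i _; rewrite mxE mulrA. Qed.
Lemma dot40l z : dot4 0 z = 0.
Proof. by rewrite /dot4 big1 // => i _; rewrite mxE mul0r. Qed.
Lemma dot4_suml I (r : seq I) P (F : I -> V4) z :
  dot4 (\sum_(i <- r | P i) F i) z = \sum_(i <- r | P i) dot4 (F i) z.
Proof.
elim/big_rec2: _ => [|i y1 y2 _ <-]; first exact: dot40l.
by rewrite dot4Dl.
Qed.

Lemma Tw_sum I (r : seq I) P (F : I -> 'F_2) :
  Tw (\sum_(i <- r | P i) F i) = \sum_(i <- r | P i) Tw (F i).
Proof. exact: (big_morph Tw TwD Tw0). Qed.

Lemma dot4_twv w x : dot4 (twv w) x = Tw (bin_dot w (resv x)).
Proof.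
rewrite /bin_dot Tw_sum; apply: eq_bigr=> i _; by rewrite !mxE TwM.
Qed.
Lemma dot4_liftv_twv u b : dot4 (liftv u) (twv b) = Tw (bin_dot u b).
Proof.
rewrite /bin_dot Tw_sum; apply: eq_bigr=> i _; by rewrite !mxE LvMTw.
Qed.

Lemma res4_sum I (r : seq I) P (F : I -> 'Z_4) :
  res4 (\sum_(i <- r | P i) F i) = \sum_(i <- r | P i) res4 (F i).
Proof. exact: (big_morph res4 res4D res40). Qed.

Lemma res4_dot4 x y : res4 (dot4 x y) = bin_dot (resv x) (resv y).
Proof. rewrite /bin_dot res4_sum; apply: eq_bigr=> i _; by rewrite !mxE res4M. Qed.

Lemma dot4_self x : dot4 x x = (hweight (resv x))%:R.
Proof.
rewrite /dot4 /hweight.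
under eq_bigr => i _ do rewrite sq4 Lv_nat.
rewrite -natr_sum; congr (_%:R).
rewrite -sum1_card [RHS]big_mkcond /=; apply: eq_bigr=> i _.
by rewrite inE !mxE; case: (_ != 0).
Qed.

End Vec.

Open Scope ring_scope.

Section Bin.
Variable n : nat.
Notation V2 := 'rV['F_2]_n.

Definition binperp (C : {set V2}) : {set V2} :=
  [set w | [forall u in C, bin_dot w u == 0]].

Lemma bin_dotC (u w : V2) : bin_dot u w = bin_dot w u.
Proof. by apply: eq_bigr=> i _; rewrite mulrC. Qed.

Lemma bin_dotE (u w : V2) : bin_dot u w = (u *m w^T) 0 0.
Proof. by rewrite mxE; apply: eq_bigr=> i _; rewrite mxE. Qed.

Definition rowmat (C : {set V2}) : 'M['F_2]_(#|C|, n) :=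
  \matrix_(i < #|C|) (enum_val i : V2).

Lemma lin_scale (C : {set V2}) a v : bin_linear_code C -> v \in C -> a *: v \in C.
Proof. by case/and3P=> _ _ /forallP/(_ a)/forall_inP; apply. Qed.

Lemma lin_add (C : {set V2}) u v : bin_linear_code C -> u \in C -> v \in C -> u + v \in C.
Proof. by case/and3P=> _ /forall_inP CD _ uC vC; have /forall_inP := CD u uC; apply. Qed.

Lemma lin_sum (C : {set V2}) I (r : seq I) (P : pred I) (F : I -> V2) :
  bin_linear_code C -> (forall i, P i -> F i \in C) ->
  \sum_(i <- r | P i) F i \in C.
Proof.
move=> HC HF; elim/big_ind: _ => //; first by case/and3P: HC.
by move=> x y; apply: lin_add.
Qed.

Lemma lin_0 (C : {set V2}) : bin_linear_code C -> 0 \in C.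
Proof. by case/and3P. Qed.

Section Lin.
Variable C : {set V2}.
Hypothesis HC : bin_linear_code C.

Lemma memC_rowmat v : (v \in C) = (v <= rowmat C)%MS.
Proof.
apply/idP/idP=> [vC|/submxP[u ->]].
  have <- : row (enum_rank_in vC v) (rowmat C) = v.
    by rewrite rowK enum_rankK_in.
  exact: row_sub.
rewrite mulmx_sum_row; apply: lin_sum => // i _; apply: lin_scale => //.
by rewrite rowK; apply: enum_valP.
Qed.

Definition Gm := row_base (rowmat C).
Definition rk := \rank (rowmat C).

Lemma memC_G v : (v \in C) = (v <= Gm)%MS.
Proof. by rewrite memC_rowmat /Gm (eq_row_base (rowmat C)). Qed.

Lemma Gm_free : row_free Gm.
Proof. exact: row_base_free. Qed.

Lemma rank_Gm : \rank Gm = rk.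
Proof. by rewrite /Gm (eq_row_base (rowmat C)). Qed.

Lemma row_Gm_in i : row i Gm \in C.
Proof. by rewrite memC_G row_sub. Qed.

Lemma card_lin : #|C| = (2 ^ rk)%N.
Proof.
have -> : C = [set u *m Gm | u in [set: 'rV['F_2]_rk]].
  apply/setP=> v; rewrite memC_G; apply/idP/imsetP=> [/submxP[u ->]|[u _ ->]].
    by exists u.
  exact: submxMl.
rewrite card_in_imset; last by move=> u1 u2 _ _; apply: (row_free_inj Gm_free).
by rewrite cardsT card_mx card_Fp // mul1n.
Qed.

Lemma perpE w : (w \in binperp C) = (w *m Gm^T == 0).
Proof.
rewrite inE; apply/forall_inP/eqP=> [h|h u].
  apply/matrixP=> i j; rewrite [i]ord1 [RHS]mxE.
  have -> : (w *m Gm^T) 0 j = bin_dot w (row j Gm).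
    by rewrite !mxE; apply: eq_bigr=> k _; rewrite !mxE.
  exact/eqP/h/row_Gm_in.
rewrite memC_G => /submxP[d ->].
by rewrite bin_dotE trmx_mul mulmxA h mul0mx mxE.
Qed.

Lemma perpperp : binperp (binperp C) = C.
Proof.
apply/setP=> v; apply/idP/idP; last first.
  move=> vC; rewrite inE; apply/forall_inP=> w; rewrite inE => /forall_inP/(_ v vC).
  by rewrite bin_dotC.
rewrite inE => /forall_inP h.
pose K := kermx Gm^T.
have sGK : (Gm <= kermx K^T)%MS.
  by rewrite sub_kermx -[Gm]trmxK -trmx_mul mulmx_ker trmx0.
have sKG : (kermx K^T <= Gm)%MS.
  rewrite -(mxrank_leqif_sup sGK).2; apply/eqP.
  rewrite mxrank_ker mxrank_tr mxrank_ker mxrank_tr.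
  by rewrite subKn // rank_leq_col.
rewrite memC_G; apply: submx_trans sKG; rewrite sub_kermx; apply/eqP.
apply/matrixP=> i j; rewrite [i]ord1 [RHS]mxE.
have : row j K \in binperp C.
  by rewrite perpE; apply/eqP/sub_kermxP; apply: submx_trans (row_sub _ _) _.
move/h/eqP <-; rewrite !mxE; apply: eq_bigr=> k _; rewrite !mxE; congr (_ * _); congr (v _ _); exact: val_inj.
Qed.

Lemma rank_half : {subset C <= binperp C} -> (rk.*2 <= n)%N.
Proof.
move=> sub.
have : (Gm <= kermx Gm^T)%MS.
  rewrite sub_kermx; apply/eqP/row_matrixP=> i.
  by rewrite row_mul row0; apply/eqP; rewrite -perpE; apply: sub; apply: row_Gm_in.
move/mxrankS; rewrite mxrank_ker mxrank_tr rank_Gm => h.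
by rewrite -addnn -leq_subRL // (leq_trans h) // leq_subr.
Qed.

End Lin.
End Bin.

Open Scope ring_scope.

Lemma hf_Tw a : hf (Tw a) = a.
Proof. by apply/eqP; move: a; c2. Qed.

Section SD.
Variable n : nat.
Notation V4 := 'rV['Z_4]_n.
Notation V2 := 'rV['F_2]_n.
Implicit Types (x y z : V4) (u v w b : V2) (D : {set V4}).

Definition dual4 (D : {set V4}) : {set V4} :=
  [set x | [forall y in D, dot4 x y == 0]].
Definition resS (D : {set V4}) : {set V2} := [set resv x | x in D].

Lemma hfv_twv (b : V2) : hfv (twv b) = b.
Proof. by apply/matrixP=> i j; rewrite !mxE hf_Tw. Qed.

Lemma dot4Dr x y z : dot4 z (x + y) = dot4 z x + dot4 z y.
Proof. by rewrite dot4C dot4Dl !(dot4C z). Qed.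

Lemma dual4P D x : reflect (forall y, y \in D -> dot4 x y = 0) (x \in dual4 D).
Proof. by rewrite inE; apply: (iffP forall_inP) => h y /h /eqP. Qed.

Lemma dual4_0 D : 0 \in dual4 D.
Proof. by apply/dual4P=> y _; rewrite dot40l. Qed.
Lemma dual4_D D x y : x \in dual4 D -> y \in dual4 D -> x + y \in dual4 D.
Proof.
move=> /dual4P hx /dual4P hy; apply/dual4P=> z zD.
by rewrite dot4Dl hx // hy // addr0.
Qed.
Lemma dual4_Z D a x : x \in dual4 D -> a *: x \in dual4 D.
Proof. by move=> /dual4P hx; apply/dual4P=> z zD; rewrite dot4Zl hx // mulr0. Qed.
Lemma dual4_N D x : x \in dual4 D -> - x \in dual4 D.
Proof. by move=> /dual4P hx; apply/dual4P=> z zD; rewrite dot4Nl hx // oppr0. Qed.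
Lemma dual4_sum D I (r : seq I) (P : pred I) (F : I -> V4) :
  (forall i, P i -> F i \in dual4 D) -> \sum_(i <- r | P i) F i \in dual4 D.
Proof. by move=> h; elim/big_ind: _ => //; [exact: dual4_0 | exact: dual4_D]. Qed.

Lemma dual4_anti D D' : D \subset D' -> dual4 D' \subset dual4 D.
Proof.
move/subsetP=> s; apply/subsetP=> x /dual4P h; apply/dual4P=> y /s; exact: h.
Qed.

Section SelfDual.
Variable D : {set V4}.
Hypothesis sdD : D = dual4 D.

Lemma sd_0 : 0 \in D. Proof. by rewrite sdD dual4_0. Qed.
Lemma sd_D x y : x \in D -> y \in D -> x + y \in D.
Proof. by rewrite sdD; apply: dual4_D. Qed.
Lemma sd_Z a x : x \in D -> a *: x \in D.
Proof. by rewrite sdD; apply: dual4_Z. Qed.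
Lemma sd_N x : x \in D -> - x \in D.
Proof. by rewrite sdD; apply: dual4_N. Qed.
Lemma sd_B x y : x \in D -> y \in D -> x - y \in D.
Proof. by move=> xD yD; rewrite sd_D // sd_N. Qed.
Lemma sd_sum I (r : seq I) (P : pred I) (F : I -> V4) :
  (forall i, P i -> F i \in D) -> \sum_(i <- r | P i) F i \in D.
Proof. by rewrite sdD; apply: dual4_sum. Qed.
Lemma sd_orth x y : x \in D -> y \in D -> dot4 x y = 0.
Proof. by move=> xD; rewrite {1}sdD in xD; move/dual4P: xD; apply. Qed.

Lemma sd_twv w : (twv w \in D) = (w \in binperp (resS D)).
Proof.
apply/idP/idP=> [tD|].
  rewrite inE; apply/forall_inP=> u /imsetP[x xD ->].
  by have := sd_orth tD xD; rewrite dot4_twv => /(congr1 hf); rewrite hf_Tw => ->.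
rewrite inE => /forall_inP h; rewrite sdD; apply/dual4P=> x xD.
by rewrite dot4_twv (eqP (h _ _)) // imset_f.
Qed.

Lemma sd_res_lin : bin_linear_code (resS D).
Proof.
apply/and3P; split.
- by rewrite -resv0 imset_f // sd_0.
- apply/forall_inP=> u /imsetP[x xD ->]; apply/forall_inP=> v /imsetP[y yD ->].
  by rewrite -resvD imset_f // sd_D.
- apply/forallP=> a; apply/forall_inP=> u /imsetP[x xD ->].
  by rewrite -resvZ imset_f // sd_Z.
Qed.

Lemma sd_res_de : doubly_even (resS D).
Proof.
apply/forall_inP=> u /imsetP[x xD ->].
by rewrite -Z4_nat_eq0 -dot4_self sd_orth.
Qed.

Lemma sd_res_so : bin_self_orthogonal (resS D).
Proof.
apply/forall_inP=> u /imsetP[x xD ->]; apply/forall_inP=> v /imsetP[y yD ->].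
by rewrite -res4_dot4 sd_orth.
Qed.

End SelfDual.

Lemma de_so (C : {set V2}) : bin_linear_code C -> doubly_even C ->
  bin_self_orthogonal C.
Proof.
move=> HC /forall_inP de; apply/forall_inP=> u uC; apply/forall_inP=> w wC.
have h0 v : v \in C -> dot4 (liftv v) (liftv v) = 0.
  by move=> vC; apply/eqP; rewrite dot4_self resv_liftv Z4_nat_eq0 de.
have := dot4_self (liftv u + liftv w).
rewrite resvD !resv_liftv (eqP (_ : _%:R == 0)); last first.
  by rewrite Z4_nat_eq0 de // lin_add.
rewrite !dot4Dl !dot4Dr !h0 // add0r addr0 (dot4C (liftv w)) .
move/double4E; rewrite res4_dot4 !resv_liftv => ->; by [].
Qed.
End SD.

Open Scope ring_scope.

Lemma rowdot n m p (A : 'M['F_2]_(m, n)) (B : 'M['F_2]_(p, n)) i j :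
  bin_dot (row i A) (row j B) = (A *m B^T) i j.
Proof. by rewrite mxE; apply: eq_bigr=> k _; rewrite !mxE. Qed.

Lemma bin_dotDr n (u v w : 'rV['F_2]_n) : bin_dot u (v + w) = bin_dot u v + bin_dot u w.
Proof. by rewrite /bin_dot -big_split; apply: eq_bigr=> i _; rewrite mxE mulrDr. Qed.
Lemma bin_dotZr n a (u v : 'rV['F_2]_n) : bin_dot u (a *: v) = a * bin_dot u v.
Proof. by rewrite /bin_dot mulr_sumr; apply: eq_bigr=> i _; rewrite mxE mulrCA. Qed.

Section Main.
Variable n : nat.
Notation V4 := 'rV['Z_4]_n.
Notation V2 := 'rV['F_2]_n.
Implicit Types (x y z : V4) (u v w b : V2) (D : {set V4}).
Variable C : {set V2}.
Hypothesis HC : bin_linear_code C.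
Hypothesis HD : doubly_even C.

Notation G := (Gm C).
Notation r := (rk C).
Definition gg (j : 'I_r) : V2 := row j G.

Lemma gg_in j : gg j \in C.
Proof. exact: row_Gm_in. Qed.

Lemma perp_rows w : (forall i, bin_dot w (gg i) = 0) -> w \in binperp C.
Proof.
move=> h; rewrite perpE //; apply/eqP/matrixP=> i j; rewrite [i]ord1 [RHS]mxE.
by rewrite -(h j) /gg -rowdot row_id.
Qed.

Lemma perp_in w v : w \in binperp C -> v \in C -> bin_dot w v = 0.
Proof. by rewrite inE => /forall_inP h /h /eqP. Qed.

Lemma memC_sum v : v \in C -> exists u : 'rV['F_2]_r, v = \sum_j u 0 j *: gg j.
Proof. by rewrite memC_G // => /submxP[u ->]; exists u; rewrite mulmx_sum_row. Qed.

Lemma resv_lsum (u : 'rV['F_2]_r) (X : 'I_r -> V4) :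
  (forall j, resv (X j) = gg j) ->
  resv (\sum_j Lv (u 0 j) *: X j) = \sum_j u 0 j *: gg j.
Proof. by move=> h; rewrite resv_sum; apply: eq_bigr=> j _; rewrite resvZ h. Qed.

Definition SC : {set {set V4}} := [set D | (D == dual4 D) && (resS D == C)].

Definition pk D j : V4 := odflt 0 [pick x in D | resv x == gg j].

Definition Psi D : {ffun 'I_r * 'I_r -> 'F_2} :=
  [ffun p => bin_dot (gg p.1) (hfv (pk D p.2 - liftv (gg p.2)))].

Definition cc (p : 'I_r * 'I_r) : 'F_2 := hf (- dot4 (liftv (gg p.1)) (liftv (gg p.2))).

Definition Valid : {set {ffun 'I_r * 'I_r -> 'F_2}} :=
  [set f : {ffun 'I_r * 'I_r -> 'F_2} | [forall p : 'I_r * 'I_r, (p.1 != p.2) ==> (f p + f (p.2, p.1) == cc p)]].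

Lemma SCP D : D \in SC -> D = dual4 D /\ resS D = C.
Proof. by rewrite inE => /andP[/eqP h1 /eqP h2]. Qed.

Lemma pkP D j : D \in SC -> pk D j \in D /\ resv (pk D j) = gg j.
Proof.
case/SCP=> _ rD; rewrite /pk; case: pickP => [x /andP[xD /eqP <-] //|].
have : gg j \in resS D by rewrite rD gg_in.
by case/imsetP=> x xD ->; move/(_ x); rewrite xD eqxx.
Qed.

Lemma F2vv v : v + v = 0.
Proof. by apply/matrixP=> i j; rewrite !mxE F2_double. Qed.

Lemma lift_form y v : resv y = v -> y = liftv v + twv (hfv (y - liftv v)).
Proof.
move=> ry; rewrite -res0_twv; first by rewrite addrC subrK.
by rewrite resvB ry resv_liftv F2vv.
Qed.
Lemma twv_sub_in D y y' : D \in SC -> y \in D -> y' \in D -> resv y = resv y' ->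
  hfv (y - y') \in binperp C.
Proof.
case/SCP=> sd rD yD y'D e.
have hz : y - y' = twv (hfv (y - y')) by apply: res0_twv; rewrite resvB e F2vv.
by rewrite -rD -sd_twv // -hz sd_B.
Qed.

Lemma psi_any D j y : D \in SC -> y \in D -> resv y = gg j ->
  forall i, Psi D (i, j) = bin_dot (gg i) (hfv (y - liftv (gg j))).
Proof.
move=> DS yD ry i; rewrite ffunE /=.
have [pD rp] := pkP j DS.
have hw := twv_sub_in DS yD pD (etrans ry (esym rp)).
set p := pk D j in pD rp hw *.
have e1 : y - liftv (gg j) = (p - liftv (gg j)) + (y - p).
  by rewrite [RHS]addrC addrA subrK.
have -> : hfv (y - liftv (gg j)) = hfv (p - liftv (gg j)) + hfv (y - p).
  apply: twv_inj; rewrite twvD -!res0_twv ?e1 //.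
  - by rewrite resvB ry rp F2vv.
  - by rewrite resvB rp resv_liftv F2vv.
  - by rewrite -e1 resvB ry resv_liftv F2vv.
by rewrite bin_dotDr (bin_dotC (gg i) (hfv (y - p))) (perp_in hw (gg_in i)) addr0.
Qed.
Lemma expand u w b b' : dot4 (liftv u + twv b) (liftv w + twv b') =
  dot4 (liftv u) (liftv w) + Tw (bin_dot u b' + bin_dot b w).
Proof.
rewrite dot4Dl !dot4Dr dot4_liftv_twv !dot4_twv resv_liftv resv_twv.
have -> : bin_dot b 0 = 0 by rewrite /bin_dot big1 // => k _; rewrite mxE mulr0.
by rewrite Tw0 addr0 TwD addrA.
Qed.

Lemma C_so u v : u \in C -> v \in C -> bin_dot u v = 0.
Proof.
move=> uC vC; have := de_so HC HD.
by move/forall_inP/(_ u uC)/forall_inP/(_ v vC)/eqP.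
Qed.

Lemma cc_prop i j : Tw (cc (i, j)) = - dot4 (liftv (gg i)) (liftv (gg j)).
Proof.
rewrite /cc -res0_Tw // res4N res4_dot4 !resv_liftv.
by apply: C_so; apply: gg_in.
Qed.

Lemma Psi_valid D : D \in SC -> Psi D \in Valid.
Proof.
move=> DS; rewrite inE; apply/forallP=> -[i j] /=; apply/implyP=> ij.
have [yiD ryi] := pkP i DS; have [yjD ryj] := pkP j DS.
have := sd_orth (SCP DS).1 yiD yjD.
rewrite (lift_form ryi) (lift_form ryj) expand => /eqP.
rewrite addrC addr_eq0 -cc_prop => /eqP /Tw_inj <-.
by rewrite !ffunE /= [bin_dot (gg j) _]bin_dotC.
Qed.
Lemma twv_shift (L : V4) a c : (L + twv a) + twv (c + a) = L + twv c.
Proof. by rewrite twvD addrACA -twvD F2vv twv0 addr0. Qed.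

Lemma Psi_sub D D' : D \in SC -> D' \in SC -> Psi D = Psi D' -> D' \subset D.
Proof.
move=> DS D'S eP.
have [sd rD] := SCP DS; have [sd' rD'] := SCP D'S.
have step1 j : pk D' j \in D.
  have [yD ry] := pkP j DS; have [y'D ry'] := pkP j D'S.
  set b := hfv (pk D j - liftv (gg j)); set b' := hfv (pk D' j - liftv (gg j)).
  have hw : b' + b \in binperp C.
    apply: perp_rows=> i; rewrite bin_dotC bin_dotDr.
    have := congr1 (fun f : {ffun _ -> _} => f (i, j)) eP; rewrite !ffunE /= -/b -/b' => ->.
    exact: F2_double.
  rewrite (lift_form ry') -/b' -(twv_shift _ b) -(lift_form ry).
  by apply: sd_D => //; rewrite sd_twv // rD.
apply/subsetP=> y yD'.
have : resv y \in C by rewrite -rD' imset_f.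
case/memC_sum=> u ru.
pose s := \sum_j Lv (u 0 j) *: pk D' j.
have rs : resv s = resv y.
  by rewrite ru; apply: resv_lsum => j; case: (pkP j D'S).
have zD' : y - s \in D'.
  by apply: sd_B => //; apply: sd_sum => // j _; apply: sd_Z => //; case: (pkP j D'S).
have hz : y - s = twv (hfv (y - s)) by apply: res0_twv; rewrite resvB rs F2vv.
have zD : y - s \in D.
  rewrite hz sd_twv // rD -rD' -sd_twv // -hz //.
have sD : s \in D by apply: sd_sum => // j _; apply: sd_Z.
by rewrite -(subrK s y) sd_D.
Qed.

Lemma Psi_inj D D' : D \in SC -> D' \in SC -> Psi D = Psi D' -> D = D'.
Proof.
move=> DS D'S eP; have s1 := Psi_sub DS D'S eP.
have [sd _] := SCP DS; have [sd' _] := SCP D'S.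
apply/eqP; rewrite eqEsubset s1 andbT.
by rewrite sd sd'; apply: dual4_anti.
Qed.
Lemma Tw_eq0 a : Tw a = 0 -> a = 0.
Proof. by rewrite -Tw0; apply: Tw_inj. Qed.

Lemma resv_xs j (B : 'M['F_2]_(r, n)) : resv (liftv (gg j) + twv (row j B)) = gg j.
Proof. by rewrite resvD resv_liftv resv_twv addr0. Qed.

Lemma Psi_surj f : f \in Valid -> exists2 D, D \in SC & Psi D = f.
Proof.
move=> fV; case/row_freeP: (Gm_free C) => G' HG'.
pose M : 'M['F_2]_r := \matrix_(i, j) f (i, j).
pose B := (G' *m M)^T.
have hB i j : bin_dot (gg i) (row j B) = f (i, j).
  by rewrite rowdot trmxK mulmxA HG' mul1mx mxE.
pose xs j := liftv (gg j) + twv (row j B).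
have rxs j : resv (xs j) = gg j by apply: resv_xs.
have x_orth j k : dot4 (xs j) (xs k) = 0.
  have [<-|jk] := eqVneq j k.
    by apply/eqP; rewrite dot4_self rxs Z4_nat_eq0; move/forall_inP: HD; apply; apply: gg_in.
  rewrite expand hB bin_dotC hB.
  move: fV; rewrite inE => /forallP/(_ (j, k)); rewrite jk /= => /eqP ->.
  by rewrite cc_prop addrN.
pose Dm := [set x | (resv x \in C) && [forall j, dot4 x (xs j) == 0]].
have DmP x : x \in Dm -> resv x \in C /\ forall j, dot4 x (xs j) = 0.
  by rewrite inE => /andP[rx /forallP h]; split => // j; apply/eqP.
have xs_in j : xs j \in Dm.
  by rewrite inE rxs gg_in; apply/forallP=> k; rewrite x_orth.
have tw_in w : w \in binperp C -> twv w \in Dm.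
  move=> wP; rewrite inE resv_twv lin_0 //; apply/forallP=> k.
  by rewrite dot4_twv rxs perp_in ?gg_in.
have Dm_sub : Dm \subset dual4 Dm.
  apply/subsetP=> x xDm; apply/dual4P=> y yDm.
  have [rx hx] := DmP x xDm; have [ry hy] := DmP y yDm.
  case: (memC_sum rx) => u ru.
  pose s := \sum_j Lv (u 0 j) *: xs j.
  have rs : resv s = resv x by rewrite ru; apply: resv_lsum.
  have hz : x - s = twv (hfv (x - s)) by apply: res0_twv; rewrite resvB rs F2vv.
  have sorth i : dot4 s (xs i) = 0.
    rewrite dot4_suml big1 // => j _; by rewrite dot4Zl x_orth mulr0.
  have wP : hfv (x - s) \in binperp C.
    apply: perp_rows=> i; apply: Tw_eq0; rewrite -(rxs i) -dot4_twv -hz.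
    by rewrite dot4Dl dot4Nl hx sorth subrr.
  have sy : dot4 s y = 0.
    rewrite dot4_suml big1 // => j _; by rewrite dot4Zl dot4C hy mulr0.
  by rewrite -(subrK s x) dot4Dl sy addr0 hz dot4_twv perp_in // Tw0.
have sub_Dm : dual4 Dm \subset Dm.
  apply/subsetP=> y /dual4P yd; rewrite inE; apply/andP; split; last first.
    by apply/forallP=> j; rewrite yd.
  rewrite -(perpperp HC) inE; apply/forall_inP=> w wP.
  have := yd _ (tw_in w wP); rewrite dot4C dot4_twv => /Tw_eq0.
  by rewrite bin_dotC => ->.
have sdm : Dm = dual4 Dm by apply/eqP; rewrite eqEsubset Dm_sub sub_Dm.
have rDm : resS Dm = C.
  apply/setP=> v; apply/imsetP/idP=> [[x xDm ->]|vC]; first by case: (DmP x xDm).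
  case: (memC_sum vC) => u ru.
  exists (\sum_j Lv (u 0 j) *: xs j); last by rewrite ru resv_lsum.
  by apply: sd_sum => // j _; apply: sd_Z.
have DmS : Dm \in SC by rewrite inE -sdm eqxx rDm eqxx.
exists Dm => //; apply/ffunP=> -[i j].
rewrite (psi_any DmS (xs_in j) (rxs j)) /xs.
by rewrite [liftv _ + _]addrC addrK hfv_twv hB.
Qed.
End Main.

Section Card.
Variable n : nat.
Variable C : {set 'rV['F_2]_n}.
Hypothesis HC : bin_linear_code C.
Hypothesis HD : doubly_even C.

Lemma card_SC : #|SC C| = #|Valid C|.
Proof.
have -> : Valid C = Psi C @: SC C.
  apply/setP=> f; apply/idP/imsetP=> [fV|[D DS ->]]; last exact: Psi_valid.
  by case: (Psi_surj HC HD fV) => D DS <-; exists D.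
by symmetry; apply: card_in_imset => D D' DS D'S; apply: Psi_inj.
Qed.
End Card.

Close Scope ring_scope.

Section Count.
Variable r : nat.
Notation P := ('I_r * 'I_r)%type.

Definition Up : {set P} := [set p : P | (p.1 <= p.2)%N].

Lemma card_Up : #|Up| = ((r * r.+1)./2)%N.
Proof.
pose Lo : {set P} := [set p : P | (p.2 <= p.1)%N].
have cLo : #|Lo| = #|Up|.
  have -> : Lo = [set (p.2, p.1) | p in Up].
    apply/setP=> -[i j]; rewrite inE; apply/idP/imsetP=> [h|[[a b] ab [-> ->]]].
      by exists (j, i); rewrite ?inE.
    by move: ab; rewrite inE.
  by apply: card_imset=> -[a b] [c d] [-> ->].
have UL : Up :|: Lo = setT.
  by apply/setP=> -[i j]; rewrite !inE leq_total.
have IL : #|Up :&: Lo| = r.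
  have -> : Up :&: Lo = [set (i, i) | i : 'I_r].
    apply/setP=> -[i j]; rewrite !inE; apply/idP/imsetP=> [h|[k _ [-> ->]]].
      exists i => //; congr (_, _); apply/val_inj/eqP; rewrite /= eqn_leq andbC.
      by [].
    by rewrite leqnn.
  by rewrite card_imset ?card_ord // => a b [].
have := cardsUI Up Lo; rewrite UL IL cLo cardsT card_prod card_ord addnn.
by move=> e; rewrite mulnSr e half_double.
Qed.

Variable c : P -> 'F_2.
Hypothesis csym : forall i j, c (i, j) = c (j, i).

Definition VS : {set {ffun P -> 'F_2}} :=
  [set f : {ffun P -> 'F_2} | [forall p : P, (p.1 != p.2) ==> (f p + f (p.2, p.1) == c p)%R]].

Lemma card_VS : #|VS| = (2 ^ ((r * r.+1)./2))%N.
Proof.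
pose phi (f : {ffun P -> 'F_2}) : {ffun P -> 'F_2} := [ffun p => if p \in Up then f p else 0%R].
have VP f p : f \in VS -> p.1 != p.2 -> (f p = c p + f (p.2, p.1))%R.
  rewrite inE => /forallP/(_ p) /implyP h /h /eqP <-.
  by rewrite -addrA F2_double addr0.
have inj : {in VS &, injective phi}.
  move=> f f' fV f'V e; apply/ffunP=> -[i j].
  have e' q : q \in Up -> f q = f' q.
    by move=> qU; have := congr1 (fun g : {ffun P -> 'F_2} => g q) e; rewrite !ffunE qU.
  have [ij|ji] := leqP i j; first by apply: e'; rewrite inE.
  have nij : (i, j).1 != (i, j).2 by rewrite /= neq_ltn ji orbT.
  by rewrite (VP _ _ fV nij) (VP _ _ f'V nij) e' // inE ltnW.
rewrite -(card_in_imset inj).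
transitivity (#|[set: 'F_2]| ^ #|Up|)%N; last by rewrite cardsT card_Fp // card_Up.
rewrite -(card_pffun_on 0%R); apply: eq_card=> h; apply/imsetP/idP.
  case=> f fV ->; apply/pffun_onP; split=> [|y _]; last by rewrite inE.
  by apply/supportP=> p pU; rewrite ffunE (negbTE pU).
case/pffun_onP=> /supportP hs _.
pose psi : {ffun P -> 'F_2} := [ffun p => if p \in Up then h p else (c p + h (p.2, p.1))%R].
exists psi.
  rewrite inE; apply/forallP=> -[i j] /=; apply/implyP=> ij; rewrite !ffunE !inE /=.
  have [le|lt] := leqP i j.
    have : ~~ (j <= i)%N by rewrite -ltnNge ltn_neqAle ij le.
    by move/negbTE => ->; rewrite csym addrCA F2_double addr0.
  by rewrite (ltnW lt) -addrA F2_double addr0.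
apply/ffunP=> p; rewrite !ffunE; case: (boolP (p \in Up)) => pU.
  by [].
by rewrite hs.
Qed.

End Count.

Close Scope ring_scope.

Section Z4count.
Variable n : nat.

Definition S4 : {set {set 'rV['Z_4]_n}} := [set D | D == dual4 D].

Lemma card_SC_good (C : {set 'rV['F_2]_n}) : bin_linear_code C -> doubly_even C ->
  #|SC C| = (2 ^ ((rk C * (rk C).+1)./2))%N.
Proof.
move=> HC HD; rewrite card_SC //.
rewrite -(@card_VS (rk C) (@cc n C)); first by apply: eq_card => f; rewrite !inE.
by move=> i j; rewrite /cc /= dot4C.
Qed.

Lemma card_S4 : #|S4| = (\sum_(k < n./2.+1) nu n k * 2 ^ (k * k.+1)./2)%N.
Proof.
have part : #|S4| = (\sum_(C : {set 'rV['F_2]_n}) #|SC C|)%N.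
  rewrite -sum1_card (partition_big (@resS n) predT) //=.
  apply: eq_bigr => C _; rewrite -sum1_card; apply: eq_bigl => D.
  by rewrite !inE.
have rhs : (\sum_(k < n./2.+1) nu n k * 2 ^ (k * k.+1)./2 =
   \sum_(C : {set 'rV['F_2]_n}) \sum_(k < n./2.+1)
      (if [&& bin_linear_code C, #|C| == 2 ^ k, bin_self_orthogonal C & doubly_even C]
       then 2 ^ (k * k.+1)./2 else 0))%N.
  rewrite exchange_big /=; apply: eq_bigr => k _.
  by rewrite /nu -sum_nat_const big_mkcond /=; apply: eq_bigr => C _; rewrite inE.
rewrite part rhs; apply: eq_bigr => C _.
case: (boolP (bin_linear_code C && doubly_even C)) => [/andP[HC HD]|bad].
  rewrite card_SC_good //.
  have hr : (rk C < n./2.+1)%N.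
    rewrite ltnS -(half_double (rk C)); apply: half_leq; apply: rank_half => //.
    move=> u uC; rewrite inE; apply/forall_inP => w wC.
    by have := de_so HC HD; move/forall_inP/(_ u uC)/forall_inP/(_ w wC).
  rewrite (bigD1 (Ordinal hr)) //= big1 ?addn0.
    by rewrite HC card_lin // eqxx de_so // HD.
  move=> k /negbTE kr; rewrite HC HD de_so // card_lin // eqn_exp2l //.
  suff -> : (rk C == k) = false by [].
  apply/negbTE; apply: contraFN kr => /eqP e; apply/eqP/val_inj => /=.
  by rewrite e.
rewrite big1; last first.
  move=> k _; case: ifP => // /and4P[HC _ _ HD]; by move: bad; rewrite HC HD.
apply/eqP; rewrite cards_eq0; apply/eqP/setP => D; rewrite !inE.
apply/negbTE; apply: contra bad => /andP[/eqP sd /eqP <-].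
by rewrite sd_res_lin // sd_res_de.
Qed.
End Z4count.

Open Scope ring_scope.

Section RCodes.
Variable n : nat.
Notation V4 := 'rV['Z_4]_n.
Implicit Types (x y c : Rvec n) (a b : V4) (C : {set Rvec n}).

Definition gR (p : Rt) : 'Z_4 := p.1 + p.2.
Definition phi1 x : V4 := \row_i (x i).1.
Definition phi2 x : V4 := \row_i gR (x i).
Definition psi a b : Rvec n := [ffun i => (a 0 i, b 0 i - a 0 i)].
Definition prodS (D1 D2 : {set V4}) : {set Rvec n} :=
  [set x | (phi1 x \in D1) && (phi2 x \in D2)].

Lemma phi1_psi a b : phi1 (psi a b) = a.
Proof. by apply/rowP=> i; rewrite !mxE ffunE. Qed.
Lemma phi2_psi a b : phi2 (psi a b) = b.
Proof. by apply/rowP=> i; rewrite !mxE ffunE /gR /= addrC subrK. Qed.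
Lemma psi_phi x : psi (phi1 x) (phi2 x) = x.
Proof.
apply/ffunP=> i; rewrite ffunE !mxE /gR (addrC (x i).1) addrK.
by case: (x i).
Qed.
Lemma phi_inj x y : phi1 x = phi1 y -> phi2 x = phi2 y -> x = y.
Proof. by move=> e1 e2; rewrite -(psi_phi x) -(psi_phi y) e1 e2. Qed.

Lemma gR_add p q : gR (Radd p q) = gR p + gR q.
Proof. by rewrite /gR /= addrACA. Qed.
Lemma gR_mul p q : gR (Rmul p q) = gR p * gR q.
Proof. by rewrite /gR /= mulrDl !mulrDr !addrA. Qed.

Lemma dotR1 x y : (dotR x y).1 = dot4 (phi1 x) (phi1 y).
Proof.
rewrite /dotR (big_morph (fun p : Rt => p.1) (id1 := 0) (op1 := +%R)) //.
by apply: eq_bigr=> i _; rewrite !mxE.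
Qed.
Lemma dotR2 x y : gR (dotR x y) = dot4 (phi2 x) (phi2 y).
Proof.
rewrite /dotR (big_morph gR (id1 := 0) (op1 := +%R) gR_add); last by rewrite /gR /= addr0.
by apply: eq_bigr=> i _; rewrite !mxE gR_mul.
Qed.

Lemma dotR_eq0 x y : (dotR x y == Rzero) =
  (dot4 (phi1 x) (phi1 y) == 0) && (dot4 (phi2 x) (phi2 y) == 0).
Proof.
rewrite -dotR1 -dotR2 /gR; case: (dotR x y) => p q /=.
rewrite /Rzero xpair_eqE; case: (p =P 0) => [->|] //=; by rewrite add0r.
Qed.

Lemma RdualP C x : reflect (forall c, c \in C ->
   dot4 (phi1 x) (phi1 c) = 0 /\ dot4 (phi2 x) (phi2 c) = 0) (x \in R_dual C).
Proof.
rewrite inE; apply: (iffP forall_inP) => h c /h; rewrite ?dotR_eq0.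
  by case/andP=> /eqP -> /eqP ->.
by case=> -> ->; rewrite eqxx.
Qed.

Lemma phi1_add x y : phi1 (vadd x y) = phi1 x + phi1 y.
Proof. by apply/rowP=> i; rewrite !mxE ffunE. Qed.
Lemma phi2_add x y : phi2 (vadd x y) = phi2 x + phi2 y.
Proof. by apply/rowP=> i; rewrite !mxE ffunE gR_add. Qed.
Lemma phi1_scale r x : phi1 (vscale r x) = r.1 *: phi1 x.
Proof. by apply/rowP=> i; rewrite !mxE ffunE. Qed.
Lemma phi2_scale r x : phi2 (vscale r x) = gR r *: phi2 x.
Proof. by apply/rowP=> i; rewrite !mxE ffunE gR_mul. Qed.
Lemma phi1_0 : phi1 (vzero n) = 0.
Proof. by apply/rowP=> i; rewrite !mxE ffunE. Qed.
Lemma phi2_0 : phi2 (vzero n) = 0.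
Proof. by apply/rowP=> i; rewrite !mxE ffunE /gR /= addr0. Qed.

Lemma Rdual_0 C : vzero n \in R_dual C.
Proof. by apply/RdualP=> c _; rewrite phi1_0 phi2_0 !dot40l. Qed.
Lemma Rdual_add C x y : x \in R_dual C -> y \in R_dual C -> vadd x y \in R_dual C.
Proof.
move=> /RdualP hx /RdualP hy; apply/RdualP=> c cC.
have [h1 h2] := hx c cC; have [h3 h4] := hy c cC.
by rewrite phi1_add phi2_add !dot4Dl h1 h2 h3 h4 addr0.
Qed.
Lemma Rdual_scale C r x : x \in R_dual C -> vscale r x \in R_dual C.
Proof.
move=> /RdualP hx; apply/RdualP=> c cC; have [h1 h2] := hx c cC.
by rewrite phi1_scale phi2_scale !dot4Zl h1 h2 !mulr0.
Qed.

Lemma Rdual_prod (D1 D2 : {set V4}) : 0 \in D1 -> 0 \in D2 ->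
  R_dual (prodS D1 D2) = prodS (dual4 D1) (dual4 D2).
Proof.
move=> z1 z2; apply/setP=> x; apply/RdualP/idP.
  move=> h; rewrite inE; apply/andP; split; apply/dual4P=> y yD.
    have : psi y 0 \in prodS D1 D2 by rewrite inE phi1_psi phi2_psi yD z2.
    by case/h; rewrite phi1_psi.
  have : psi 0 y \in prodS D1 D2 by rewrite inE phi1_psi phi2_psi yD z1.
  by case/h; rewrite phi2_psi.
rewrite inE => /andP[/dual4P h1 /dual4P h2] c; rewrite inE => /andP[c1 c2].
by rewrite h1 // h2.
Qed.

Lemma prodS_inj (D1 D2 E1 E2 : {set V4}) : 0 \in D1 -> 0 \in D2 -> 0 \in E1 -> 0 \in E2 ->
  prodS D1 D2 = prodS E1 E2 -> D1 = E1 /\ D2 = E2.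
Proof.
move=> d1 d2 e1 e2 /setP e; split; apply/setP=> a.
  by have := e (psi a 0); rewrite !inE phi1_psi phi2_psi d2 e2 !andbT.
by have := e (psi 0 a); rewrite !inE phi1_psi phi2_psi d1 e1.
Qed.

Lemma sd_decomp C : C = R_dual C ->
  C = prodS [set phi1 x | x in C] [set phi2 x | x in C].
Proof.
move=> sd; apply/setP=> x; apply/idP/idP=> [xC|].
  by rewrite inE !imset_f.
rewrite inE => /andP[/imsetP[c1 c1C e1] /imsetP[c2 c2C e2]].
have -> : x = vadd (vscale (1, -1) c1) (vscale (0, 1) c2).
  apply: phi_inj.
    by rewrite phi1_add !phi1_scale /= scale1r scale0r addr0.
  by rewrite phi2_add !phi2_scale /gR /= subrr scale0r !add0r scale1r.
by rewrite sd; apply: Rdual_add; apply: Rdual_scale; rewrite -sd.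
Qed.

Definition LS : {set {set Rvec n}} :=
  [set C : {set Rvec n} | R_linear_code C && R_self_dual C].

Lemma LS_eq : LS = [set prodS p.1 p.2 | p in setX (S4 n) (S4 n)].
Proof.
apply/setP=> C; rewrite inE; apply/andP/imsetP.
  case=> _ /eqP sd.
  set D1 := [set phi1 x | x in C]; set D2 := [set phi2 x | x in C].
  have e : C = prodS D1 D2 := sd_decomp sd.
  have zC : vzero n \in C by rewrite sd Rdual_0.
  have z1 : 0 \in D1 by rewrite -phi1_0 imset_f.
  have z2 : 0 \in D2 by rewrite -phi2_0 imset_f.
  have : prodS D1 D2 = prodS (dual4 D1) (dual4 D2) by rewrite -Rdual_prod // -e.
  case/prodS_inj => //; try exact: dual4_0.
  move=> h1 h2; exists (D1, D2) => //.
  by rewrite inE !inE -h1 -h2 !eqxx.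
case=> -[D1 D2]; rewrite !inE /= => /andP[/eqP h1 /eqP h2] ->.
have sd : prodS D1 D2 = R_dual (prodS D1 D2).
  have z1 : 0 \in D1 by rewrite h1 dual4_0.
  have z2 : 0 \in D2 by rewrite h2 dual4_0.
  by rewrite (Rdual_prod z1 z2) -h1 -h2.
split; last by apply/eqP.
move: sd; set C0 := prodS D1 D2 => sd.
apply/and3P; split.
- by rewrite sd Rdual_0.
- apply/forall_inP=> x xC; apply/forall_inP=> y yC.
  by rewrite sd; apply: Rdual_add; rewrite -sd.
- apply/forallP=> r; apply/forall_inP=> x xC.
  by rewrite sd; apply: Rdual_scale; rewrite -sd.
Qed.

Lemma card_LS : #|LS| = (#|S4 n| * #|S4 n|)%N.
Proof.
rewrite LS_eq card_in_imset ?cardsX // => -[D1 D2] [E1 E2].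
rewrite !inE /= => /andP[/eqP h1 /eqP h2] /andP[/eqP h3 /eqP h4] e.
have z (D : {set V4}) : D = dual4 D -> 0 \in D by move=> ->; apply: dual4_0.
by case: (prodS_inj (z _ h1) (z _ h2) (z _ h3) (z _ h4) e) => -> ->.
Qed.

End RCodes.

Close Scope ring_scope.

Theorem theorem6 (n : nat) :
  #|[set C : {set Rvec n} | R_linear_code C && R_self_dual C]| =
  (\sum_(k < n./2.+1) nu n k * 2 ^ (k * k.+1)./2) ^ 2.
Proof.
have -> : [set C : {set Rvec n} | R_linear_code C && R_self_dual C] = LS n by [].
by rewrite card_LS card_S4 mulnn.
Qed.
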